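(* Fix a day $d_i$ in a run of the online greedy algorithm on an instance of Model 1, and let $H_i$ be the weighted bipartite graph with category capacities $b'_{i,k}$ constructed on that day. Then any maximum-weight $b$-matching in $H_i$ among those of size at most $s_i$ is also a maximum-size $b$-matching in $H_i$ among those of size at most $s_i$.
   Context: Model 1: finite sets of agents $A$, categories $C$ and days $D=\{d_1,\dots,d_T\}$; each agent is eligible for a subset of categories; daily supply $s_i$ for day $d_i$; daily quota $q_{ik}$ for category $c_k$ on day $d_i$; each agent $a_j$ has a priority factor $\alpha_j>0$ and a set of available days; discount factor $\delta\in(0,1)$. In the online greedy algorithm, on day $d_i$ the set $A_i$ consists of the agents available on $d_i$ and not yet allocated on earlier days; $H_i$ is the bipartite graph with parts $A_i$ and $C$, with an edge $(a_j,c_k)$ whenever $a_j$ is eligible for $c_k$, of weight $w_i(a_j,c_k)=\alpha_j\delta^{i-1}$; each agent has capacity $1$ and category $c_k$ has capacity $b'_{i,k}=q_{ik}$. A $b$-matching is a set of edges in which each vertex is incident to at most its capacity many edges; its size is its number of edges and its weight is the sum of edge weights. *)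

(* Defs.v *)
From HB Require Import structures.
From mathcomp Require Import all_boot all_order all_algebra.
Set Implicit Arguments. Unset Strict Implicit. Unset Printing Implicit Defensive.
Import Order.TTheory GRing.Theory Num.Theory.
Local Open Scope ring_scope.

Section Model1.
Variables (R : realFieldType) (Agent Cat : finType) (T : nat).
Variable eligible : Agent -> Cat -> bool.
Variable quota : 'I_T -> Cat -> nat.
Variable alpha : Agent -> R.
Variable avail : Agent -> 'I_T -> bool.
Variable delta : R.

(* Day d_i is represented by i : 'I_T (0-based, so d_i = d_{i+1} in the paper).
   prev = set of agents allocated on days before d_i. *)
Definition day_agents (prev : {set Agent}) (i : 'I_T) : {set Agent} :=
  [set a | avail a i & a \notin prev].

Definition is_edge (prev : {set Agent}) (i : 'I_T) (e : Agent * Cat) : bool :=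
  (e.1 \in day_agents prev i) && eligible e.1 e.2.

(* w_i(a_j, c_k) = alpha_j * delta^(i-1)  (paper 1-based day index). *)
Definition edge_weight (i : 'I_T) (e : Agent * Cat) : R :=
  alpha e.1 * delta ^+ (val i).

(* b-matching in H_i: agent capacity 1, category capacity b'_{i,k} = q_{ik}. *)
Definition is_bmatching (prev : {set Agent}) (i : 'I_T) (M : {set Agent * Cat}) : bool :=
  [&& [forall e in M, is_edge prev i e],
      [forall a : Agent, #|[set e in M | e.1 == a]| <= 1]%N &
      [forall c : Cat, #|[set e in M | e.2 == c]| <= quota i c]%N].

Definition bm_weight (i : 'I_T) (M : {set Agent * Cat}) : R :=
  \sum_(e in M) edge_weight i e.

Definition feasible (prev : {set Agent}) (i : 'I_T) (s : nat) (M : {set Agent * Cat}) : bool :=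
  is_bmatching prev i M && (#|M| <= s)%N.

Definition max_weight (prev : {set Agent}) (i : 'I_T) (s : nat) (M : {set Agent * Cat}) : Prop :=
  feasible prev i s M /\
  forall M' : {set Agent * Cat}, feasible prev i s M' -> bm_weight i M' <= bm_weight i M.

Definition max_size (prev : {set Agent}) (i : 'I_T) (s : nat) (M : {set Agent * Cat}) : Prop :=
  feasible prev i s M /\
  forall M' : {set Agent * Cat}, feasible prev i s M' -> (#|M'| <= #|M|)%N.
End Model1.

(* Main.v *)
Require Import Defs.
From HB Require Import structures.
From mathcomp Require Import all_boot all_order all_algebra.
Import Order.TTheory GRing.Theory Num.Theory.
Local Open Scope ring_scope.
Set Implicit Arguments. Unset Strict Implicit. Unset Printing Implicit Defensive.

Definition bm (A C : finType) (E : pred (A * C)) (q : C -> nat) (M : {set A * C}) : bool :=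
  [&& [forall e in M, E e],
      [forall a : A, #|[set e in M | e.1 == a]| <= 1]%N &
      [forall c : C, #|[set e in M | e.2 == c]| <= q c]%N].

Lemma bm_inj (A C : finType) (E : pred (A * C)) (q : C -> nat) (M : {set A * C}) :
  bm E q M -> {in M &, injective fst}.
Proof.
case/and3P=> _ /forallP H _ x y xM yM exy.
have /card_le1_eqP := H x.1; apply; rewrite inE ?xM ?yM ?exy //= eqxx.
Qed.

Lemma bm_sub (A C : finType) (E : pred (A * C)) (q : C -> nat) (M1 M2 : {set A * C}) :
  M1 \subset M2 -> bm E q M2 -> bm E q M1.
Proof.
move=> /subsetP s12 /and3P[/forall_inP H1 /forallP H2 /forallP H3].
apply/and3P; split.
- by apply/forall_inP=> e /s12; apply: H1.
- apply/forallP=> a; apply: leq_trans (H2 a); apply: subset_leq_card.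
  by apply/subsetP=> e; rewrite !inE => /andP[/s12 -> ->].
- apply/forallP=> c; apply: leq_trans (H3 c); apply: subset_leq_card.
  by apply/subsetP=> e; rewrite !inE => /andP[/s12 -> ->].
Qed.

Lemma card_exch (A C : finType) (M : {set A * C}) x y :
  x \in M -> y \notin M -> #|y |: (M :\ x)| = #|M|.
Proof.
move=> xM yM; rewrite cardsU1 inE negb_and yM orbT /=.
by rewrite (cardsD1 x M) xM.
Qed.

Lemma bm_exch (A C : finType) (E : pred (A * C)) (q : C -> nat) (M : {set A * C}) x y :
  bm E q M -> x \in M -> E y -> y.1 \notin [set e.1 | e in M] ->
  (#|[set e in M | e.2 == y.2]| < q y.2)%N || (x.2 == y.2) ->
  bm E q (y |: (M :\ x)).
Proof.
move=> /and3P[/forall_inP H1 /forallP H2 /forallP H3] xM Ey yA hc.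
apply/and3P; split.
- apply/forall_inP=> e; rewrite !inE => /orP[/eqP -> //|/andP[_ /H1 //]].
- apply/forallP=> a; case: (eqVneq a y.1) => [->|nay].
  + rewrite (_ : [set e in _ | _] = [set y]) ?cards1 //; apply/setP=> e; rewrite !inE.
    case: (eqVneq e y) => [->|ney]; rewrite ?eqxx //=.
    apply/negbTE; apply/negP=> /andP[/andP[_ eM] /eqP e1].
    by move: yA; rewrite -e1 (imset_f _ eM).
  + apply: leq_trans (H2 a); apply: subset_leq_card.
    apply/subsetP=> e; rewrite !inE => /andP[/orP[/eqP ->|/andP[_ ->]] //].
    by rewrite eq_sym (negbTE nay).
- apply/forallP=> c; case: (eqVneq c y.2) => [->|ncy].
  + case/orP: hc => [hlt|/eqP hx].
    * apply: leq_trans _ hlt.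
      apply: leq_trans (_ : #|y |: [set e in M | e.2 == y.2]| <= _)%N.
        by apply: subset_leq_card; apply/subsetP=> e; rewrite !inE;
          case/andP=> /orP[->|/andP[_ ->]] -> //; rewrite orbT.
      by rewrite cardsU1; case: (y \in _).
    * apply: leq_trans (H3 y.2).
      have xS : x \in [set e in M | e.2 == y.2] by rewrite inE xM hx eqxx.
      rewrite [X in (_ <= X)%N](cardsD1 x) xS add1n.
      apply: leq_trans (_ : #|y |: ([set e in M | e.2 == y.2] :\ x)| <= _)%N.
        by apply: subset_leq_card; apply/subsetP=> e; rewrite !inE;
          case/andP=> /orP[->|/andP[-> ->]] -> //; rewrite orbT.
      by rewrite cardsU1; case: (y \in _).
  + apply: leq_trans (H3 c); apply: subset_leq_card.
    apply/subsetP=> e; rewrite !inE => /andP[/orP[/eqP ->|/andP[_ ->]] //].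
    by rewrite eq_sym (negbTE ncy).
Qed.

Lemma step (A C : finType) (E : pred (A * C)) (q : C -> nat) (M M' : {set A * C}) :
  bm E q M -> bm E q M' -> (#|M| < #|M'|)%N ->
  ~~ ([set e.1 | e in M] \subset [set e.1 | e in M']) ->
  exists M1, [/\ bm E q M1, #|M1| = #|M'| & (#|M :\: M1| < #|M :\: M'|)%N].
Proof.
move=> hM hM' hlt /subsetPn[b /imsetP[y yM ->] ybM'].
have yM' : y \notin M' by apply: contra ybM' => yM'; apply: imset_f.
have Ey : E y by case/and3P: hM => /forall_inP H _ _; apply: H.
suff [x [xM' xM hc]] : exists x, [/\ x \in M', x \notin M &
    (#|[set e in M' | e.2 == y.2]| < q y.2)%N || (x.2 == y.2)].
  exists (y |: (M' :\ x)); split.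
  - exact: bm_exch.
  - exact: card_exch.
  - apply: proper_card; apply/properP; split.
      apply/subsetP=> e; rewrite !inE.
      move=> /andP[H eM]; rewrite eM andbT; apply: contra H => eM'.
      have nex : e != x by apply: contraNneq xM => <-.
      by rewrite nex eM' orbT.
    by exists y; rewrite !inE ?yM ?(negbTE yM') ?eqxx.
have [hsp|hfull] := boolP (#|[set e in M' | e.2 == y.2]| < q y.2)%N.
  have [x xM' xA] : exists2 x, x \in M' & x.1 \notin [set e.1 | e in M].
    apply/exists_inP; apply: contraLR hlt; rewrite negb_exists_in -leqNgt.
    move=> /forall_inP H.
    rewrite -(card_in_imset (bm_inj hM')) -(card_in_imset (bm_inj hM)).
    apply: subset_leq_card; apply/subsetP=> a /imsetP[x xM' ->].
    by have := H x xM'; rewrite negbK.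
  exists x; split; [done| |by apply/orP; left].
  by apply: contra xA => xM; apply: imset_f.
have [x xS xM] : exists2 x, x \in [set e in M' | e.2 == y.2] & x \notin M.
  apply/exists_inP; apply: contraR hfull; rewrite negb_exists_in => /forall_inP H.
  apply: (@leq_trans #|[set e in M | e.2 == y.2]|); last first.
    by case/and3P: hM => _ _ /forallP.
  apply: proper_card; apply/properP; split.
    apply/subsetP=> e eS; have := H e eS; rewrite negbK => eM.
    by move: eS; rewrite !inE eM => /andP[_ ->].
  by exists y; rewrite !inE ?yM ?(negbTE yM') ?eqxx.
move: xS; rewrite inE => /andP[xM' hx].
by exists x; split => //; rewrite hx orbT.
Qed.

Lemma aug (A C : finType) (E : pred (A * C)) (q : C -> nat) n (M M' : {set A * C}) :
  (#|M :\: M'| <= n)%N -> bm E q M -> bm E q M' -> (#|M| < #|M'|)%N ->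
  exists M'', [/\ bm E q M'', #|M''| = #|M'| &
                  [set e.1 | e in M] \subset [set e.1 | e in M'']].
Proof.
elim: n M' => [|n IH] M' hn hM hM' hlt;
  (have [hs|hs] := boolP ([set e.1 | e in M] \subset [set e.1 | e in M']);
   first by exists M'); have [M1 [h1 h2 h3]] := step hM hM' hlt hs.
  by move: (leq_trans h3 hn).
have hl1 : (#|M| < #|M1|)%N by rewrite h2.
have [M'' [? ? ?]] := IH M1 (leq_trans h3 hn) hM h1 hl1.
by exists M''; split; rewrite // -h2.
Qed.

Theorem lemma1 (R : realFieldType) (Agent Cat : finType) (T : nat)
  (eligible : Agent -> Cat -> bool) (supply : 'I_T -> nat)
  (quota : 'I_T -> Cat -> nat) (alpha : Agent -> R)
  (avail : Agent -> 'I_T -> bool) (delta : R)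
  (halpha : forall a, 0 < alpha a) (hdelta : 0 < delta < 1)
  (prev : {set Agent}) (i : 'I_T) (M : {set Agent * Cat}) :
  max_weight eligible quota alpha avail delta prev i (supply i) M ->
  max_size eligible quota avail prev i (supply i) M.
Proof.
case=> hF hmax; split => // M' hF'.
rewrite leqNgt; apply/negP => hlt.
move: hF hF'; rewrite /feasible /is_bmatching => /andP[hM hsM] /andP[hM' hsM'].
set E := is_edge eligible avail prev i.
have [M'' [h1 h2 h3]] := aug (E := E) (q := quota i) (leqnn _) hM hM' hlt.
have hF'' : feasible eligible quota avail prev i (supply i) M''.
  by rewrite /feasible h2 hsM' andbT.
have := hmax M'' hF''; apply/negP; rewrite -ltNge.
have gpos : forall a, 0 < alpha a * delta ^+ val i.
  by move=> a; case/andP: hdelta => d0 _; rewrite mulr_gt0 ?exprn_gt0.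
have wE : forall N, bm E (quota i) N ->
    bm_weight alpha delta i N = \sum_(a in [set e.1 | e in N]) alpha a * delta ^+ val i.
  by move=> N hN; rewrite (big_imset _ (bm_inj hN)).
rewrite (wE _ hM) (wE _ h1) (bigID (fun a => a \in [set e.1 | e in M])
  (fun a => a \in [set e.1 | e in M''])) /=.
have -> : \sum_(a in [set e.1 | e in M''] | a \in [set e.1 | e in M])
   alpha a * delta ^+ val i = \sum_(a in [set e.1 | e in M]) alpha a * delta ^+ val i.
  apply: eq_bigl => a; apply/andP/idP => [[]//|aM]; split => //.
  exact: (subsetP h3).
rewrite ltrDl.
have [b bM'' bM] : exists2 b, b \in [set e.1 | e in M''] & b \notin [set e.1 | e in M].
  apply/exists_inP; apply: contraLR hlt; rewrite negb_exists_in -leqNgt.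
  move=> /forall_inP H.
  rewrite -h2 -(card_in_imset (bm_inj h1)) -(card_in_imset (bm_inj hM)).
  apply: subset_leq_card; apply/subsetP=> a aM''.
  by have := H a aM''; rewrite negbK.
rewrite (bigD1 b) /=; last by rewrite bM'' bM.
apply: ltr_pwDl; first exact: gpos.
by apply: sumr_ge0 => a _; apply: ltW.
Qed.
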